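(* Let $y$ be the solution of the problem $\varepsilon^2 y''(x)=f(x,y)$ on $(0,1)$, $y(0)=y(1)=0$, with $f$ and the Shishkin mesh $\{x_i\}_{i=0}^N$ as described in the context, and let $G$ be the discrete operator defined in the context. Assume that $\varepsilon\leqslant C_0/N$ for some constant $C_0>0$. Then there is a constant $C>0$ independent of $N$ and $\varepsilon$ such that, for the indices $i\in\{N/4,\ldots,N/2-1\}$ with $x_{i-1},x_i,x_{i+1}\in[x_{N/4},1/2]$, $$|(Gy)_i|\leqslant \frac{C}{N^2},$$ where $(Gy)_i$ denotes the $i$-th component of $G$ applied to the vector $(y(x_0),\ldots,y(x_N))^T$.
   Context: Problem: $\varepsilon^2y''(x)=f(x,y)$ on $(0,1)$, $y(0)=y(1)=0$, where $\varepsilon>0$ is a small parameter, $f\in C^k([0,1]\times\mathbb{R})$ for some $k\geq 2$, and $f_y=\partial f/\partial y\geq m>0$ on $[0,1]\times\mathbb{R}$ for a constant $m$; this problem has a unique solution $y$. Shishkin mesh: $N$ is a positive integer divisible by 4, $\lambda=\min\{1/4,\,2\varepsilon\ln N/\sqrt{m}\}$, and it is assumed that $\lambda=2\varepsilon\ln N/\sqrt{m}$. The mesh $0=x_0<x_1<\cdots<x_N=1$ is equidistant on each of $[0,\lambda]$ (with $N/4$ subintervals), $[\lambda,1-\lambda]$ (with $N/2$ subintervals) and $[1-\lambda,1]$ (with $N/4$ subintervals); thus $x_{N/4}=\lambda$, $x_{3N/4}=1-\lambda$, $x_{N/2}=1/2$, subintervals in $[0,\lambda]\cup[1-\lambda,1]$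 have length $4\lambda/N$ and those in $[\lambda,1-\lambda]$ have length $2(1-2\lambda)/N$. Scheme: $\gamma$ is a constant with $\gamma\geq f_y$, and $\beta=\sqrt{\gamma}/\varepsilon$. For $i=1,\ldots,N$ let $\ell_i=x_i-x_{i-1}$, $d_i=\beta/\tanh(\beta\ell_i)$, $a_i=\beta/\sinh(\beta\ell_i)$, $\Delta d_i=d_i-a_i$. For $v=(v_0,\ldots,v_N)^T\in\mathbb{R}^{N+1}$ write $f_j=f(x_j,v_j)$ and define $Gv\in\mathbb{R}^{N+1}$ by $(Gv)_0=v_0$, $(Gv)_N=v_N$ and, for $i=1,\ldots,N-1$, $$(Gv)_i=\frac{\gamma}{\Delta d_i+\Delta d_{i+1}}\Big[(3a_i+d_i+\Delta d_{i+1})(v_{i-1}-v_i)-(3a_{i+1}+d_{i+1}+\Delta d_i)(v_i-v_{i+1})-\frac{f_{i-1}+2f_i+f_{i+1}}{\gamma}(\Delta d_i+\Delta d_{i+1})\Big].$$ *)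

(* Defs.v *)
From Stdlib Require Import Reals Lra Lia.
Open Scope R_scope.

Definition cont_on_strip (g : R -> R -> R) : Prop :=
  forall x t, 0 <= x <= 1 -> forall e, e > 0 -> exists d, d > 0 /\
    forall x' t', 0 <= x' <= 1 -> Rabs (x' - x) < d -> Rabs (t' - t) < d ->
      Rabs (g x' t' - g x t) < e.

Definition is_pdx (g gx : R -> R -> R) : Prop :=
  forall x t, 0 <= x <= 1 ->
    limit1_in (fun h => (g (x + h) t - g x t) / h)
              (fun h => h <> 0 /\ 0 <= x + h <= 1) (gx x t) 0.

Definition is_pdy (g gy : R -> R -> R) : Prop :=
  forall x t, 0 <= x <= 1 -> derivable_pt_lim (fun s => g x s) t (gy x t).

Fixpoint Ck (k : nat) (g : R -> R -> R) : Prop :=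
  match k with
  | O => cont_on_strip g
  | S k' => cont_on_strip g /\
      exists gx gy, is_pdx g gx /\ is_pdy g gy /\ Ck k' gx /\ Ck k' gy
  end.

Definition is_solution (eps : R) (f : R -> R -> R) (y : R -> R) : Prop :=
  (forall x, 0 <= x <= 1 -> limit1_in y (fun t => 0 <= t <= 1) (y x) x) /\
  (exists y' y'' : R -> R, forall x, 0 < x < 1 ->
      derivable_pt_lim y x (y' x) /\ derivable_pt_lim y' x (y'' x) /\
      eps ^ 2 * y'' x = f x (y x)) /\
  y 0 = 0 /\ y 1 = 0.

Definition shlambda (eps m : R) (N : nat) : R :=
  Rmin (1 / 4) (2 * eps * ln (INR N) / sqrt m).

Definition shmesh (eps m : R) (N : nat) (i : nat) : R :=
  let lam := shlambda eps m N in
  if (i <=? N / 4)%nat then INR i * (4 * lam / INR N)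
  else if (i <=? 3 * N / 4)%nat then
    lam + INR (i - N / 4) * (2 * (1 - 2 * lam) / INR N)
  else (1 - lam) + INR (i - 3 * N / 4) * (4 * lam / INR N).

Definition hstep (x : nat -> R) (i : nat) : R := x i - x (i - 1)%nat.
Definition dcoef (beta : R) (x : nat -> R) (i : nat) : R :=
  beta / tanh (beta * hstep x i).
Definition acoef (beta : R) (x : nat -> R) (i : nat) : R :=
  beta / sinh (beta * hstep x i).
Definition ddcoef (beta : R) (x : nat -> R) (i : nat) : R :=
  dcoef beta x i - acoef beta x i.

Definition Gop (gamma eps : R) (f : R -> R -> R) (N : nat) (x : nat -> R)
    (v : nat -> R) (i : nat) : R :=
  let beta := sqrt gamma / eps in
  let d := dcoef beta x in
  let a := acoef beta x in
  let dd := ddcoef beta x in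
  let fj := fun j => f (x j) (v j) in
  if (i =? 0)%nat then v 0%nat
  else if (i =? N)%nat then v N
  else
    gamma / (dd i + dd (S i)) *
      ((3 * a i + d i + dd (S i)) * (v (i - 1)%nat - v i)
       - (3 * a (S i) + d (S i) + dd i) * (v i - v (S i))
       - (fj (i - 1)%nat + 2 * fj i + fj (S i)) / gamma * (dd i + dd (S i))).

(* Main.v *)
Require Import Defs.
From Stdlib Require Import Reals Lra Lia.
Open Scope R_scope.

Definition wcont (g : R -> R) : Prop :=
  forall c, 0 <= c <= 1 -> forall e, e > 0 -> exists d, d > 0 /\
    forall x, 0 <= x <= 1 -> Rabs (x - c) < d -> Rabs (g x - g c) < e.

Definition clamp (x : R) : R := Rmax 0 (Rmin 1 x).

Lemma clamp_in x : 0 <= clamp x <= 1.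
Proof. unfold clamp, Rmax, Rmin; repeat destruct Rle_dec; lra. Qed.

Lemma clamp_id x : 0 <= x <= 1 -> clamp x = x.
Proof. unfold clamp, Rmax, Rmin; intros; repeat destruct Rle_dec; lra. Qed.

Lemma clamp_lip x y : Rabs (clamp x - clamp y) <= Rabs (x - y).
Proof. unfold clamp, Rmax, Rmin; repeat destruct Rle_dec; unfold Rabs; repeat destruct Rcase_abs; lra. Qed.

Lemma cont_pt_intro (g : R -> R) c :
  (forall e, e > 0 -> exists d, d > 0 /\ forall x, Rabs (x - c) < d -> Rabs (g x - g c) < e) ->
  continuity_pt g c.
Proof.
  intros H. unfold continuity_pt, continue_in, limit1_in, limit_in. simpl. unfold R_dist.
  intros e He. destruct (H e He) as [d [Hd H']]. exists d. split; [lra|].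
  intros x [_ Hx]. apply H'. exact Hx.
Qed.

Lemma wcont_clamp g : wcont g -> forall c, continuity_pt (fun x => g (clamp x)) c.
Proof.
  intros Hg c. apply cont_pt_intro. intros e He.
  destruct (Hg (clamp c) (clamp_in c) e He) as [d [Hd H]].
  exists d. split; auto. intros x Hx. apply H. apply clamp_in.
  eapply Rle_lt_trans. apply clamp_lip. auto.
Qed.

Lemma wcont_max g : wcont g -> exists x0, 0 <= x0 <= 1 /\ forall x, 0 <= x <= 1 -> g x <= g x0.
Proof.
  intros Hg. destruct (continuity_ab_maj (fun x => g (clamp x)) 0 1) as [M [HM HM1]].
  lra. intros; apply wcont_clamp; auto.
  exists M. rewrite clamp_id in HM; auto. split; auto. intros x Hx.
  specialize (HM x Hx). rewrite !clamp_id in HM; auto.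
Qed.

Lemma wcont_opp g : wcont g -> wcont (fun x => - g x).
Proof.
  intros Hg c Hc e He. destruct (Hg c Hc e He) as [d [Hd H]]. exists d; split; auto.
  intros x Hx Hxc. specialize (H x Hx Hxc).
  replace (- g x - - g c) with (- (g x - g c)) by ring. rewrite Rabs_Ropp; auto.
Qed.

Lemma wcont_bounded g : wcont g -> exists B, 0 <= B /\ forall x, 0 <= x <= 1 -> Rabs (g x) <= B.
Proof.
  intros Hg. destruct (wcont_max g Hg) as [a [Ha HA]].
  destruct (wcont_max _ (wcont_opp g Hg)) as [b [Hb HB]].
  exists (Rabs (g a) + Rabs (g b)). split. pose proof (Rabs_pos (g a)); pose proof (Rabs_pos (g b)); lra.
  intros x Hx. specialize (HA x Hx). specialize (HB x Hx). simpl in HB.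
  unfold Rabs; repeat destruct Rcase_abs; lra.
Qed.

Lemma mvt_bounds (h h' : R -> R) lo hi :
  (forall t, derivable_pt_lim h t (h' t)) ->
  (forall t, lo <= h' t <= hi) ->
  forall s t, s <= t -> lo * (t - s) <= h t - h s <= hi * (t - s).
Proof.
  intros Hd Hb s t Hst. destruct (Req_dec s t) as [->|Hne].
  replace (h t - h t) with 0 by ring. replace (t - t) with 0 by ring. lra.
  destruct (MVT_cor2 h h' s t) as [c [Hc _]]. lra. intros; apply Hd.
  rewrite Hc. specialize (Hb c). split; apply Rmult_le_compat_r; lra.
Qed.

Lemma mvt_local (h h' : R -> R) s t e :
  s <= t -> (forall c, s <= c <= t -> derivable_pt_lim h c (h' c)) ->
  (forall c, s <= c <= t -> Rabs (h' c) <= e) ->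
  Rabs (h t - h s) <= e * (t - s).
Proof.
  intros Hst Hd Hb. destruct (Req_dec s t) as [->|Hne].
  replace (h t - h t) with 0 by ring. rewrite Rabs_R0. lra.
  destruct (MVT_cor2 h h' s t) as [c [Hc Hc2]]. lra. intros; apply Hd; lra.
  rewrite Hc, Rabs_mult, (Rabs_right (t - s)) by lra.
  apply Rmult_le_compat_r. lra. apply Hb; lra.
Qed.

Lemma split_lemma (G Gx Gy : R -> R -> R) (r : R -> R) x :
  is_pdx G Gx -> is_pdy G Gy -> cont_on_strip Gy -> wcont r -> 0 < x < 1 ->
  forall e, e > 0 -> exists d, d > 0 /\ forall h, h <> 0 -> Rabs h < d -> 0 <= x + h <= 1 ->
   Rabs (G (x + h) (r (x + h)) - G x (r x) - Gx x (r x) * h - Gy x (r x) * (r (x + h) - r x))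
     <= e * (Rabs h + Rabs (r (x + h) - r x)).
Proof.
  intros HGx HGy HcGy Hr Hx e He.
  assert (Hx' : 0 <= x <= 1) by lra.
  pose proof (HGx x (r x) Hx') as L. unfold limit1_in, limit_in in L; simpl in L; unfold R_dist in L.
  destruct (L e He) as [d1 [Hd1 L1]].
  destruct (HcGy x (r x) Hx' e He) as [d2 [Hd2 C2]].
  destruct (Hr x Hx' d2 Hd2) as [d3 [Hd3 C3]].
  exists (Rmin d1 (Rmin d2 d3)). split.
  apply Rmin_pos; [lra| apply Rmin_pos; lra].
  intros h Hh0 Hh Hxh.
  assert (h1 : Rabs h < d1) by (eapply Rlt_le_trans; [exact Hh| apply Rmin_l]).
  assert (h2 : Rabs h < d2) by (eapply Rlt_le_trans; [exact Hh| eapply Rle_trans; [apply Rmin_r| apply Rmin_l]]).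
  assert (h3 : Rabs h < d3) by (eapply Rlt_le_trans; [exact Hh| eapply Rle_trans; [apply Rmin_r| apply Rmin_r]]).
  assert (A : Rabs (G (x + h) (r x) - G x (r x) - Gx x (r x) * h) <= e * Rabs h).
  { assert (Q' : Rabs ((G (x + h) (r x) - G x (r x)) / h - Gx x (r x)) < e).
    { apply L1. split. split; auto. replace (h - 0) with h by ring. auto. }
    replace (G (x + h) (r x) - G x (r x) - Gx x (r x) * h)
      with (((G (x + h) (r x) - G x (r x)) / h - Gx x (r x)) * h) by (field; auto).
    rewrite Rabs_mult. apply Rmult_le_compat_r. apply Rabs_pos. lra. }
  assert (Hrd : Rabs (r (x + h) - r x) < d2).
  { apply C3. auto. replace (x + h - x) with h by ring. auto. }
  assert (B : Rabs (G (x + h) (r (x + h)) - G (x + h) (r x) - Gy x (r x) * (r (x + h) - r x))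
              <= e * Rabs (r (x + h) - r x)).
  { set (phi := fun t => G (x + h) t - Gy x (r x) * t).
    set (phi' := fun t => Gy (x + h) t - Gy x (r x)).
    assert (Hd : forall c, derivable_pt_lim phi c (phi' c)).
    { intros c. unfold phi, phi'. apply derivable_pt_lim_minus. apply HGy; auto.
      replace (Gy x (r x)) with (Gy x (r x) * 1) at 2 by ring.
      apply derivable_pt_lim_scal. apply derivable_pt_lim_id. }
    assert (Hb : forall c, Rabs (c - r x) <= Rabs (r (x + h) - r x) -> Rabs (phi' c) <= e).
    { intros c Hc. unfold phi'. left. apply C2. auto. replace (x + h - x) with h by ring. lra. lra. }
    destruct (Rle_dec (r x) (r (x + h))) as [Hle|Hlt].
    - pose proof (mvt_local phi phi' (r x) (r (x + h)) e Hle (fun c _ => Hd c)) as M.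
      replace (G (x + h) (r (x + h)) - G (x + h) (r x) - Gy x (r x) * (r (x + h) - r x))
        with (phi (r (x + h)) - phi (r x)) by (unfold phi; ring).
      rewrite (Rabs_right (r (x + h) - r x)) by lra. apply M.
      intros c Hc. apply Hb. rewrite !Rabs_right; lra.
    - pose proof (mvt_local phi phi' (r (x + h)) (r x) e ltac:(lra) (fun c _ => Hd c)) as M.
      replace (G (x + h) (r (x + h)) - G (x + h) (r x) - Gy x (r x) * (r (x + h) - r x))
        with (- (phi (r x) - phi (r (x + h)))) by (unfold phi; ring).
      rewrite Rabs_Ropp. rewrite (Rabs_left (r (x + h) - r x)) by lra.
      replace (- (r (x + h) - r x)) with (r x - r (x + h)) by ring. apply M.
      intros c Hc. apply Hb. rewrite (Rabs_left (r (x + h) - r x)) by lra.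
      unfold Rabs; destruct Rcase_abs; lra. }
  replace (G (x + h) (r (x + h)) - G x (r x) - Gx x (r x) * h - Gy x (r x) * (r (x + h) - r x))
    with ((G (x + h) (r (x + h)) - G (x + h) (r x) - Gy x (r x) * (r (x + h) - r x))
         + (G (x + h) (r x) - G x (r x) - Gx x (r x) * h)) by ring.
  eapply Rle_trans. apply Rabs_triang. lra.
Qed.

Lemma f_mono (f fy : R -> R -> R) m gamma x :
  is_pdy f fy -> (forall x t, 0 <= x <= 1 -> m <= fy x t) ->
  (forall x t, 0 <= x <= 1 -> fy x t <= gamma) -> 0 <= x <= 1 ->
  forall s t, s <= t -> m * (t - s) <= f x t - f x s <= gamma * (t - s).
Proof.
  intros Hd Hm Hg Hx. apply (mvt_bounds (f x) (fy x)).
  intros t; apply Hd; auto. intros t; split; auto.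
Qed.

Lemma root_sig (f fy : R -> R -> R) m gamma :
  is_pdy f fy -> (forall x t, 0 <= x <= 1 -> m <= fy x t) ->
  (forall x t, 0 <= x <= 1 -> fy x t <= gamma) -> 0 < m ->
  forall x, {t | f (clamp x) t = 0}.
Proof.
  intros Hd Hm Hg Hm0 x.
  set (c := clamp x). assert (Hc : 0 <= c <= 1) by apply clamp_in.
  set (T := Rabs (f c 0) / m).
  assert (HT : 0 <= T) by (unfold T; apply Rmult_le_pos; [apply Rabs_pos| left; apply Rinv_0_lt_compat; auto]).
  assert (HmT : m * T = Rabs (f c 0)) by (unfold T; field; lra).
  pose proof (f_mono f fy m gamma c Hd Hm Hg Hc 0 T HT) as [A _].
  pose proof (f_mono f fy m gamma c Hd Hm Hg Hc (- T) 0 ltac:(lra)) as [B _].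
  assert (H1 : 0 <= f c T) by (unfold Rabs in HmT; destruct Rcase_abs; nra).
  assert (H2 : f c (- T) <= 0) by (unfold Rabs in HmT; destruct Rcase_abs; nra).
  destruct (IVT_cor (fun t => f c t) (- T) T) as [z [_ Hz]].
  - intros t. apply derivable_continuous_pt. exists (fy c t). apply Hd; auto.
  - lra.
  - simpl. nra.
  - exists z. exact Hz.
Qed.

Lemma r_wcont (f fy : R -> R -> R) m gamma (r : R -> R) :
  cont_on_strip f -> is_pdy f fy -> (forall x t, 0 <= x <= 1 -> m <= fy x t) ->
  (forall x t, 0 <= x <= 1 -> fy x t <= gamma) -> 0 < m ->
  (forall x, 0 <= x <= 1 -> f x (r x) = 0) -> wcont r.
Proof.
  intros Hc Hd Hm Hg Hm0 Hr c Hc01 e He.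
  destruct (Hc c (r c) Hc01 (m * e) ltac:(nra)) as [d [Hd0 H]].
  exists d. split; auto. intros x Hx Hxc.
  assert (Q : Rabs (f x (r c) - f c (r c)) < m * e).
  { apply H; auto. replace (r c - r c) with 0 by ring. rewrite Rabs_R0; lra. }
  rewrite (Hr c Hc01), (Rminus_0_r) in Q.
  assert (M : m * Rabs (r x - r c) <= Rabs (f x (r x) - f x (r c))).
  { destruct (Rle_dec (r c) (r x)).
    - pose proof (f_mono f fy m gamma x Hd Hm Hg Hx (r c) (r x) r0) as [A _].
      rewrite !Rabs_right; nra.
    - pose proof (f_mono f fy m gamma x Hd Hm Hg Hx (r x) (r c) ltac:(lra)) as [A _].
      rewrite !Rabs_left1; nra. }
  rewrite (Hr x Hx), Rminus_0_l, Rabs_Ropp in M.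
  nra.
Qed.

Lemma wcont_comp (G : R -> R -> R) (r : R -> R) :
  cont_on_strip G -> wcont r -> wcont (fun x => G x (r x)).
Proof.
  intros HG Hr c Hc e He.
  destruct (HG c (r c) Hc e He) as [d [Hd H]].
  destruct (Hr c Hc d Hd) as [d2 [Hd2 H2]].
  exists (Rmin d d2). split. apply Rmin_pos; lra.
  intros x Hx Hxc. apply H; auto.
  eapply Rlt_le_trans; [exact Hxc| apply Rmin_l].
  apply H2; auto. eapply Rlt_le_trans; [exact Hxc| apply Rmin_r].
Qed.

Lemma r_deriv (f fx gy : R -> R -> R) m (r : R -> R) x :
  is_pdx f fx -> is_pdy f gy -> cont_on_strip gy -> wcont r -> 0 < m ->
  (forall x t, 0 <= x <= 1 -> m <= gy x t) ->
  (forall x, 0 <= x <= 1 -> f x (r x) = 0) -> 0 < x < 1 ->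
  derivable_pt_lim r x (- fx x (r x) / gy x (r x)).
Proof.
  intros Hx Hy Hcy Hr Hm0 Hm Hroot Hx01 e He.
  set (P := fx x (r x)). set (Q := gy x (r x)).
  assert (HQ : m <= Q) by (apply Hm; lra).
  set (K := 2 * (1 + Rabs P) / m).
  assert (HK : 0 <= K) by (unfold K; apply Rmult_le_pos; [pose proof (Rabs_pos P); lra| left; apply Rinv_0_lt_compat; lra]).
  set (eta := Rmin (m / 2) (Rmin 1 (e * m / (2 * (1 + K))))).
  assert (Heta : 0 < eta).
  { unfold eta. apply Rmin_pos. lra. apply Rmin_pos. lra.
    apply Rmult_lt_0_compat. nra. apply Rinv_0_lt_compat; lra. }
  assert (eta1 : eta <= m / 2) by apply Rmin_l.
  assert (eta2 : eta <= 1) by (eapply Rle_trans; [apply Rmin_r| apply Rmin_l]).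
  assert (eta3 : eta <= e * m / (2 * (1 + K))) by (eapply Rle_trans; [apply Rmin_r| apply Rmin_r]).
  destruct (split_lemma f fx gy r x Hx Hy Hcy Hr Hx01 eta Heta) as [d [Hd H]].
  assert (Hdd : 0 < Rmin d (Rmin x (1 - x))) by (apply Rmin_pos; [lra| apply Rmin_pos; lra]).
  exists (mkposreal _ Hdd). intros h Hh0 Hh. simpl in Hh.
  assert (h1 : Rabs h < d) by (eapply Rlt_le_trans; [exact Hh| apply Rmin_l]).
  assert (h2 : Rabs h < Rmin x (1 - x)) by (eapply Rlt_le_trans; [exact Hh| apply Rmin_r]).
  assert (h3 : 0 <= x + h <= 1).
  { pose proof (Rmin_l x (1 - x)); pose proof (Rmin_r x (1 - x)).
    unfold Rabs in h2; destruct Rcase_abs in h2; lra. }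
  specialize (H h Hh0 h1 h3).
  rewrite (Hroot (x + h) h3), (Hroot x ltac:(lra)) in H. fold P Q in H.
  set (D := r (x + h) - r x) in *.
  replace (0 - 0 - P * h - Q * D) with (- (Q * D + P * h)) in H by ring.
  rewrite Rabs_Ropp in H.
  assert (HD : Rabs D <= K * Rabs h).
  { assert (T : Rabs (Q * D) <= Rabs (Q * D + P * h) + Rabs (P * h)).
    { replace (Q * D) with ((Q * D + P * h) + - (P * h)) at 1 by ring.
      eapply Rle_trans. apply Rabs_triang. rewrite Rabs_Ropp; lra. }
    rewrite !Rabs_mult, (Rabs_right Q) in T by lra.
    assert (m * Rabs D <= Q * Rabs D) by (apply Rmult_le_compat_r; [apply Rabs_pos| lra]).
    assert (eta * Rabs h <= 1 * Rabs h) by (apply Rmult_le_compat_r; [apply Rabs_pos| lra]).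
    assert (eta * Rabs D <= m / 2 * Rabs D) by (apply Rmult_le_compat_r; [apply Rabs_pos| lra]).
    assert (m / 2 * Rabs D <= (1 + Rabs P) * Rabs h) by lra.
    unfold K. replace (2 * (1 + Rabs P) / m * Rabs h) with ((1 + Rabs P) * Rabs h / (m / 2)) by (field; lra).
    apply (Rmult_le_reg_l (m / 2)); [lra|].
    replace (m / 2 * ((1 + Rabs P) * Rabs h / (m / 2))) with ((1 + Rabs P) * Rabs h) by (field; lra).
    lra. }
  replace ((r (x + h) - r x) / h - - P / Q) with ((Q * D + P * h) / (Q * h)) by (fold D; field; lra).
  assert (Hhp : 0 < Rabs h) by (apply Rabs_pos_lt; auto).
  assert (Z : Rabs (Q * D + P * h) < e * (Q * Rabs h)).
  { assert (eta * (Rabs h + Rabs D) <= eta * ((1 + K) * Rabs h)) by (apply Rmult_le_compat_l; lra).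
    assert (eta * (1 + K) <= e * m / 2).
    { replace (e * m / 2) with ((e * m / (2 * (1 + K))) * (1 + K)) by (field; lra).
      apply Rmult_le_compat_r; lra. }
    assert (e * m / 2 * Rabs h < e * (Q * Rabs h)).
    { assert (0 < e * Rabs h * (Q - m / 2)) by (apply Rmult_lt_0_compat; [apply Rmult_lt_0_compat|]; lra).
      nra. }
    assert (eta * (1 + K) * Rabs h <= e * m / 2 * Rabs h) by (apply Rmult_le_compat_r; lra).
    nra. }
  replace (D / h - - P / Q) with ((Q * D + P * h) / (Q * h)) by (field; lra).
  unfold Rdiv. rewrite Rabs_mult, Rabs_inv, Rabs_mult, (Rabs_right Q) by lra.
  apply (Rmult_lt_reg_r (Q * Rabs h)); [nra|].
  rewrite Rmult_assoc, Rinv_l by nra. lra.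
Qed.

Lemma comp_deriv (G Gx Gy : R -> R -> R) (r : R -> R) x r1 :
  is_pdx G Gx -> is_pdy G Gy -> cont_on_strip Gy -> wcont r -> 0 < x < 1 ->
  derivable_pt_lim r x r1 ->
  derivable_pt_lim (fun s => G s (r s)) x (Gx x (r x) + Gy x (r x) * r1).
Proof.
  intros HGx HGy Hc Hr Hx Hd e He.
  set (A := Gy x (r x)).
  set (eta := e / (2 * (2 + Rabs r1))).
  assert (Heta : 0 < eta) by (unfold eta; apply Rdiv_lt_0_compat; [lra| pose proof (Rabs_pos r1); lra]).
  destruct (split_lemma G Gx Gy r x HGx HGy Hc Hr Hx eta Heta) as [d1 [Hd1 S]].
  set (e2 := Rmin 1 (e / (2 * (Rabs A + 1)))).
  assert (He2 : 0 < e2) by (unfold e2; apply Rmin_pos; [lra| apply Rdiv_lt_0_compat; [lra| pose proof (Rabs_pos A); lra]]).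
  destruct (Hd e2 He2) as [d2 D2].
  assert (Hdd : 0 < Rmin d1 (Rmin d2 (Rmin x (1 - x)))).
  { apply Rmin_pos; [lra| apply Rmin_pos; [apply cond_pos| apply Rmin_pos; lra]]. }
  exists (mkposreal _ Hdd). intros h Hh0 Hh. simpl in Hh.
  assert (h1 : Rabs h < d1) by (eapply Rlt_le_trans; [exact Hh| apply Rmin_l]).
  assert (h2 : Rabs h < d2) by (eapply Rlt_le_trans; [exact Hh| eapply Rle_trans; [apply Rmin_r| apply Rmin_l]]).
  assert (h3 : Rabs h < Rmin x (1 - x)) by (eapply Rlt_le_trans; [exact Hh| eapply Rle_trans; [apply Rmin_r| apply Rmin_r]]).
  assert (h4 : 0 <= x + h <= 1).
  { pose proof (Rmin_l x (1 - x)); pose proof (Rmin_r x (1 - x)).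
    unfold Rabs in h3; destruct Rcase_abs in h3; lra. }
  specialize (S h Hh0 h1 h4). specialize (D2 h Hh0 h2).
  fold A in S.
  set (Dr := r (x + h) - r x) in *.
  set (DG := G (x + h) (r (x + h)) - G x (r x)) in *.
  assert (Hhp : 0 < Rabs h) by (apply Rabs_pos_lt; auto).
  assert (E2 : e2 <= 1) by apply Rmin_l.
  assert (E3 : e2 <= e / (2 * (Rabs A + 1))) by apply Rmin_r.
  assert (HDr : Rabs Dr <= (Rabs r1 + 1) * Rabs h).
  { assert (T : Rabs (Dr / h) <= Rabs r1 + 1).
    { replace (Dr / h) with ((Dr / h - r1) + r1) by ring.
      eapply Rle_trans. apply Rabs_triang. lra. }
    unfold Rdiv in T. rewrite Rabs_mult, Rabs_inv in T.
    replace (Rabs Dr) with (Rabs Dr * / Rabs h * Rabs h) by (field; lra).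
    apply Rmult_le_compat_r; lra. }
  replace (DG / h - (Gx x (r x) + A * r1))
    with ((DG - Gx x (r x) * h - A * Dr) / h + A * (Dr / h - r1)) by (field; auto).
  eapply Rle_lt_trans. apply Rabs_triang.
  assert (P1 : Rabs ((DG - Gx x (r x) * h - A * Dr) / h) <= e / 2).
  { unfold Rdiv. rewrite Rabs_mult, Rabs_inv.
    apply (Rmult_le_reg_r (Rabs h)); [lra|].
    replace (Rabs (DG - Gx x (r x) * h - A * Dr) * / Rabs h * Rabs h)
      with (Rabs (DG - Gx x (r x) * h - A * Dr)) by (field; lra).
    eapply Rle_trans. exact S.
    assert (eta * (Rabs h + Rabs Dr) <= eta * ((2 + Rabs r1) * Rabs h)) by (apply Rmult_le_compat_l; lra).
    replace (e * / 2 * Rabs h) with (eta * ((2 + Rabs r1) * Rabs h)) by (unfold eta; field; pose proof (Rabs_pos r1); lra).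
    lra. }
  assert (P2 : Rabs (A * (Dr / h - r1)) < e / 2).
  { rewrite Rabs_mult.
    assert (Rabs A * Rabs (Dr / h - r1) <= Rabs A * e2) by (apply Rmult_le_compat_l; [apply Rabs_pos| lra]).
    assert (Rabs A * e2 < e / 2).
    { assert (Rabs A * e2 <= Rabs A * (e / (2 * (Rabs A + 1)))) by (apply Rmult_le_compat_l; [apply Rabs_pos| lra]).
      assert (Rabs A * (e / (2 * (Rabs A + 1))) < e / 2).
      { replace (Rabs A * (e / (2 * (Rabs A + 1)))) with (e / 2 * (Rabs A / (Rabs A + 1))) by (field; pose proof (Rabs_pos A); lra).
        assert (Rabs A / (Rabs A + 1) < 1).
        { apply (Rmult_lt_reg_r (Rabs A + 1)). pose proof (Rabs_pos A); lra.
          replace (Rabs A / (Rabs A + 1) * (Rabs A + 1)) with (Rabs A) by (field; pose proof (Rabs_pos A); lra). lra. }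
        assert (0 <= Rabs A / (Rabs A + 1)) by (apply Rmult_le_pos; [apply Rabs_pos| left; apply Rinv_0_lt_compat; pose proof (Rabs_pos A); lra]).
        nra. }
      lra. }
    lra. }
  lra.
Qed.

Definition cc (g : R -> R) := forall c, continuity_pt (fun x => g (clamp x)) c.

Lemma cc_plus g h : cc g -> cc h -> cc (fun x => g x + h x).
Proof. intros Hg Hh c. exact (continuity_pt_plus _ _ c (Hg c) (Hh c)). Qed.
Lemma cc_minus g h : cc g -> cc h -> cc (fun x => g x - h x).
Proof. intros Hg Hh c. exact (continuity_pt_minus _ _ c (Hg c) (Hh c)). Qed.
Lemma cc_mult g h : cc g -> cc h -> cc (fun x => g x * h x).
Proof. intros Hg Hh c. exact (continuity_pt_mult _ _ c (Hg c) (Hh c)). Qed.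
Lemma cc_opp g : cc g -> cc (fun x => - g x).
Proof. intros Hg c. exact (continuity_pt_opp _ c (Hg c)). Qed.
Lemma cc_div g h : cc g -> cc h -> (forall x, 0 <= x <= 1 -> h x <> 0) -> cc (fun x => g x / h x).
Proof. intros Hg Hh Hn c. exact (continuity_pt_div _ _ c (Hg c) (Hh c) (Hn _ (clamp_in c))). Qed.
Lemma cc_wcont g : wcont g -> cc g.
Proof. intros Hg c. apply wcont_clamp; auto. Qed.

Lemma cc_bounded g : cc g -> exists B, 0 <= B /\ forall x, 0 <= x <= 1 -> Rabs (g x) <= B.
Proof.
  intros Hg.
  destruct (continuity_ab_maj (fun x => g (clamp x)) 0 1) as [M [HM HM1]]. lra. intros; apply Hg.
  destruct (continuity_ab_min (fun x => g (clamp x)) 0 1) as [M' [HM' HM1']]. lra. intros; apply Hg.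
  exists (Rabs (g (clamp M)) + Rabs (g (clamp M'))). split.
  pose proof (Rabs_pos (g (clamp M))); pose proof (Rabs_pos (g (clamp M'))); lra.
  intros x Hx. specialize (HM x Hx). specialize (HM' x Hx). simpl in *. rewrite (clamp_id x Hx) in HM, HM'.
  unfold Rabs; repeat destruct Rcase_abs; lra.
Qed.

Lemma Ck_cont n g : Ck n g -> cont_on_strip g.
Proof. destruct n; simpl; tauto. Qed.

Lemma Ck2 k f : (2 <= k)%nat -> Ck k f ->
  cont_on_strip f /\ exists fx gy, is_pdx f fx /\ is_pdy f gy /\ cont_on_strip fx /\ cont_on_strip gy /\
   exists fxx fxy gyx gyy, is_pdx fx fxx /\ is_pdy fx fxy /\ is_pdx gy gyx /\ is_pdy gy gyy /\
     cont_on_strip fxx /\ cont_on_strip fxy /\ cont_on_strip gyx /\ cont_on_strip gyy.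
Proof.
  intros Hk H. destruct k as [|[|k]]; try lia. simpl in H.
  destruct H as [Hc [fx [gy [H1 [H2 [[Hcx [fxx [fxy [H3 [H4 [H5 H6]]]]]] [Hcy [gyx [gyy [H7 [H8 [H9 H10]]]]]]]]]]]].
  split; auto. exists fx, gy. repeat split; auto.
  exists fxx, fxy, gyx, gyy. repeat split; auto; eapply Ck_cont; eauto.
Qed.

Lemma reduced_solution k (f fy : R -> R -> R) m gamma :
  (2 <= k)%nat -> Ck k f -> is_pdy f fy -> 0 < m ->
  (forall x t, 0 <= x <= 1 -> m <= fy x t) ->
  (forall x t, 0 <= x <= 1 -> fy x t <= gamma) ->
  exists (r rp rpp : R -> R) (R2 : R),
    wcont r /\ (forall x, 0 <= x <= 1 -> f x (r x) = 0) /\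
    (forall x, 0 < x < 1 -> derivable_pt_lim r x (rp x)) /\
    (forall x, 0 < x < 1 -> derivable_pt_lim rp x (rpp x)) /\
    0 <= R2 /\ (forall x, 0 < x < 1 -> Rabs (rpp x) <= R2).
Proof.
  intros Hk HCk Hfy Hm0 Hm Hg.
  destruct (Ck2 k f Hk HCk) as [Hcf [fx [gy [Hx [Hy [Hcx [Hcy
     [fxx [fxy [gyx [gyy [Hxx [Hxy [Hyx [Hyy [Cxx [Cxy [Cyx Cyy]]]]]]]]]]]]]]]]]].
  assert (Egy : forall x t, 0 <= x <= 1 -> gy x t = fy x t).
  { intros x t Hx01. eapply uniqueness_limite; [apply Hy| apply Hfy]; auto. }
  assert (Hmg : forall x t, 0 <= x <= 1 -> m <= gy x t) by (intros; rewrite Egy; auto).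
  set (r := fun x => proj1_sig (root_sig f fy m gamma Hfy Hm Hg Hm0 x)).
  assert (Hroot : forall x, 0 <= x <= 1 -> f x (r x) = 0).
  { intros x Hx01. unfold r. destruct (root_sig f fy m gamma Hfy Hm Hg Hm0 x) as [t Ht]. simpl.
    rewrite clamp_id in Ht; auto. }
  assert (Hr : wcont r) by (apply (r_wcont f fy m gamma r); auto).
  set (P := fun x => fx x (r x)). set (Q := fun x => gy x (r x)).
  set (rp := fun x => - P x / Q x).
  set (P' := fun x => fxx x (r x) + fxy x (r x) * rp x).
  set (Q' := fun x => gyx x (r x) + gyy x (r x) * rp x).
  set (rpp := fun x => ((- P' x) * Q x - Q' x * (- P x)) / (Q x)²).
  assert (HQ : forall x, 0 <= x <= 1 -> Q x <> 0) by (intros x Hx01; unfold Q; pose proof (Hmg x (r x) Hx01); lra).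
  assert (Drp : forall x, 0 < x < 1 -> derivable_pt_lim r x (rp x)).
  { intros x Hx01. apply (r_deriv f fx gy m r x); auto. }
  assert (Drpp : forall x, 0 < x < 1 -> derivable_pt_lim rp x (rpp x)).
  { intros x Hx01.
    assert (DP : derivable_pt_lim P x (P' x)).
    { unfold P, P'. apply (comp_deriv fx fxx fxy r x (rp x)); auto. }
    assert (DQ : derivable_pt_lim Q x (Q' x)).
    { unfold Q, Q'. apply (comp_deriv gy gyx gyy r x (rp x)); auto. }
    pose proof (derivable_pt_lim_div (fun x => - P x) Q x (- P' x) (Q' x)
                 (derivable_pt_lim_opp P x (P' x) DP) DQ (HQ x ltac:(lra))) as H.
    exact H. }
  assert (Ccc : cc rpp).
  { assert (cr : cc rp).
    { unfold rp. apply cc_div; auto. apply cc_opp; apply cc_wcont; unfold P; apply wcont_comp; auto.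
      apply cc_wcont; unfold Q; apply wcont_comp; auto. }
    assert (cP : cc P) by (apply cc_wcont; unfold P; apply wcont_comp; auto).
    assert (cQ : cc Q) by (apply cc_wcont; unfold Q; apply wcont_comp; auto).
    unfold rpp, P', Q'. apply cc_div.
    - apply cc_minus; apply cc_mult; auto.
      apply cc_opp; apply cc_plus; [| apply cc_mult]; auto; apply cc_wcont; apply wcont_comp; auto.
      apply cc_plus; [| apply cc_mult]; auto; apply cc_wcont; apply wcont_comp; auto.
      apply cc_opp; auto.
    - unfold Rsqr. apply cc_mult; auto.
    - intros x Hx01. unfold Rsqr. apply Rmult_integral_contrapositive; split; apply HQ; auto. }
  destruct (cc_bounded rpp Ccc) as [R2 [HR2 BR2]].
  exists r, rp, rpp, R2. repeat split; auto.
  intros x Hx01. apply BR2. lra.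
Qed.

Lemma local_incr g x0 l : derivable_pt_lim g x0 l -> l > 0 ->
  exists d, d > 0 /\ forall h, 0 < h < d -> g (x0 + h) > g x0 /\ g (x0 - h) < g x0.
Proof.
  intros H Hl. destruct (H l Hl) as [d Hd].
  exists d. split. apply cond_pos. intros h Hh.
  assert (A : forall k, k <> 0 -> Rabs k < d -> (g (x0 + k) - g x0) / k > 0).
  { intros k Hk Hkd. specialize (Hd k Hk Hkd).
    unfold Rabs in Hd; destruct Rcase_abs in Hd; lra. }
  split.
  - pose proof (A h ltac:(lra) ltac:(rewrite Rabs_right; lra)) as Q.
    assert (g (x0 + h) - g x0 = (g (x0 + h) - g x0) / h * h) by (field; lra).
    assert (0 < (g (x0 + h) - g x0) / h * h) by (apply Rmult_lt_0_compat; lra). lra.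
  - pose proof (A (- h) ltac:(lra) ltac:(rewrite Rabs_left; lra)) as Q.
    replace (x0 + - h) with (x0 - h) in Q by ring.
    assert (g (x0 - h) - g x0 = - ((g (x0 - h) - g x0) / - h * h)) by (field; lra).
    assert (0 < (g (x0 - h) - g x0) / - h * h) by (apply Rmult_lt_0_compat; lra). lra.
Qed.

Lemma interior_max_contra (psi psi1 : R -> R) x0 L :
  0 < x0 < 1 -> (forall x, 0 < x < 1 -> derivable_pt_lim psi x (psi1 x)) ->
  derivable_pt_lim psi1 x0 L -> L > 0 ->
  (forall x, 0 <= x <= 1 -> psi x <= psi x0) -> False.
Proof.
  intros Hx0 Hd HL HL0 Hmax.
  assert (Z : psi1 x0 = 0).
  { destruct (Rtotal_order (psi1 x0) 0) as [Hn|[Hz|Hp]]; auto.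
    - pose proof (derivable_pt_lim_opp psi x0 (psi1 x0) (Hd x0 Hx0)) as Ho.
      destruct (local_incr _ x0 _ Ho ltac:(lra)) as [d [Hd0 Hi]].
      set (h := Rmin d x0 / 2).
      assert (0 < h < d) by (unfold h; pose proof (Rmin_l d x0); pose proof (Rmin_r d x0); assert (0 < Rmin d x0) by (apply Rmin_pos; lra); lra).
      assert (h < x0) by (unfold h; pose proof (Rmin_r d x0); assert (0 < Rmin d x0) by (apply Rmin_pos; lra); lra).
      destruct (Hi h H) as [_ Q]. unfold opp_fct in Q.
      pose proof (Hmax (x0 - h) ltac:(lra)). lra.
    - destruct (local_incr _ x0 _ (Hd x0 Hx0) Hp) as [d [Hd0 Hi]].
      set (h := Rmin d (1 - x0) / 2).
      assert (0 < Rmin d (1 - x0)) by (apply Rmin_pos; lra).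
      assert (0 < h < d) by (unfold h; pose proof (Rmin_l d (1 - x0)); lra).
      assert (h < 1 - x0) by (unfold h; pose proof (Rmin_r d (1 - x0)); lra).
      destruct (Hi h H0) as [Q _].
      pose proof (Hmax (x0 + h) ltac:(lra)). lra. }
  destruct (local_incr _ x0 _ HL HL0) as [d [Hd0 Hi]].
  set (h := Rmin d (1 - x0) / 2).
  assert (0 < Rmin d (1 - x0)) by (apply Rmin_pos; lra).
  assert (0 < h < d) by (unfold h; pose proof (Rmin_l d (1 - x0)); lra).
  assert (h < 1 - x0) by (unfold h; pose proof (Rmin_r d (1 - x0)); lra).
  destruct (MVT_cor2 psi psi1 x0 (x0 + h)) as [c [Hc Hc2]]. lra.
  intros c Hc. apply Hd. lra.
  destruct (Hi (c - x0) ltac:(lra)) as [Q _]. replace (x0 + (c - x0)) with c in Q by ring.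
  pose proof (Hmax (x0 + h) ltac:(lra)).
  assert (0 < psi1 c * (x0 + h - x0)) by (apply Rmult_lt_0_compat; lra).
  lra.
Qed.
From Coquelicot Require Import Coquelicot.
Open Scope R_scope.

Lemma exp_derivs (K R0 a : R) x :
  derivable_pt_lim (fun x => K + R0 * (exp (- a * x) + exp (- a * (1 - x)))) x
     (R0 * (- a * exp (- a * x) + a * exp (- a * (1 - x)))) /\
  derivable_pt_lim (fun x => R0 * (- a * exp (- a * x) + a * exp (- a * (1 - x)))) x
     (R0 * (a * a) * (exp (- a * x) + exp (- a * (1 - x)))).
Proof.
  split; apply is_derive_Reals; auto_derive; auto. all: replace (1 + - x) with (1 - x) by ring; ring.
Qed.

Lemma cc_max g : cc g -> exists x0, 0 <= x0 <= 1 /\ forall x, 0 <= x <= 1 -> g x <= g x0.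
Proof.
  intros Hg. destruct (continuity_ab_maj (fun x => g (clamp x)) 0 1) as [M [HM HM1]].
  lra. intros; apply Hg.
  exists M. split; auto. intros x Hx. specialize (HM x Hx). simpl in HM.
  rewrite (clamp_id x Hx), (clamp_id M HM1) in HM. auto.
Qed.

Lemma cc_cont g : (forall c, continuity_pt g c) -> cc g.
Proof.
  intros H c.
  assert (Hc : continuity_pt clamp c).
  { apply cont_pt_intro. intros e He. exists e. split; auto. intros x Hx.
    eapply Rle_lt_trans. apply clamp_lip. auto. }
  exact (continuity_pt_comp clamp g c Hc (H (clamp c))).
Qed.

Lemma solution_wcont eps f y : is_solution eps f y -> wcont y.
Proof.
  intros [Hc _] c Hc01 e He. pose proof (Hc c Hc01) as L.
  unfold limit1_in, limit_in in L; simpl in L; unfold R_dist in L.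
  destruct (L e He) as [d [Hd Q]]. exists d; split; auto.
Qed.

Lemma comparison (f fy : R -> R -> R) m gamma eps (y r rp rpp : R -> R) R2 R0 :
  is_pdy f fy -> (forall x t, 0 <= x <= 1 -> m <= fy x t) ->
  (forall x t, 0 <= x <= 1 -> fy x t <= gamma) -> 0 < m -> 0 < eps ->
  is_solution eps f y -> wcont r -> (forall x, 0 <= x <= 1 -> f x (r x) = 0) ->
  (forall x, 0 < x < 1 -> derivable_pt_lim r x (rp x)) ->
  (forall x, 0 < x < 1 -> derivable_pt_lim rp x (rpp x)) ->
  0 <= R2 -> (forall x, 0 < x < 1 -> Rabs (rpp x) <= R2) ->
  Rabs (r 0) <= R0 -> Rabs (r 1) <= R0 ->
  forall x, 0 <= x <= 1 ->
    Rabs (y x - r x) <= R2 / m * eps ^ 2 +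
       R0 * (exp (- (sqrt m / eps) * x) + exp (- (sqrt m / eps) * (1 - x))).
Proof.
  intros Hfy Hm Hg Hm0 Heps Hsol Hr Hroot Drp Drpp HR2 Brpp Hr0 Hr1.
  set (a := sqrt m / eps).
  assert (Ha2 : a * a * eps ^ 2 = m).
  { unfold a. replace (sqrt m / eps * (sqrt m / eps) * eps ^ 2) with (sqrt m * sqrt m) by (field; lra).
    apply sqrt_sqrt; lra. }
  set (K := R2 / m * eps ^ 2).
  assert (HK : 0 <= K) by (unfold K; apply Rmult_le_pos; [apply Rmult_le_pos; [lra| left; apply Rinv_0_lt_compat; lra]| apply pow2_ge_0]).
  set (B := fun x => K + R0 * (exp (- a * x) + exp (- a * (1 - x)))).
  set (B1 := fun x => R0 * (- a * exp (- a * x) + a * exp (- a * (1 - x)))).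
  set (B2 := fun x => R0 * (a * a) * (exp (- a * x) + exp (- a * (1 - x)))).
  assert (HR0 : 0 <= R0) by (pose proof (Rabs_pos (r 0)); lra).
  destruct Hsol as [Hyc [[y' [y'' Hy]] [Hy0 Hy1]]].
  assert (Hyw : wcont y) by (apply (solution_wcont eps f y); split; auto; split; [exists y', y''; auto| auto]).
  assert (side : forall s, (s = 1 \/ s = -1) -> forall x, 0 <= x <= 1 -> s * (y x - r x) <= B x).
  { intros s Hs.
    set (psi := fun x => s * (y x - r x) - B x).
    assert (Cpsi : cc psi).
    { unfold psi. apply cc_minus. apply cc_mult. apply cc_cont; intros; apply continuity_pt_const; intros u v; auto.
      apply cc_minus; apply cc_wcont; auto.
      apply cc_cont. intros c. apply derivable_continuous_pt. exists (B1 c). apply (exp_derivs K R0 a c). }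
    destruct (cc_max psi Cpsi) as [x0 [Hx0 Hmax]].
    intros z Hz. specialize (Hmax z Hz) as Hmx. unfold psi in Hmx.
    destruct (Rle_dec (psi x0) 0) as [Hle|Hgt]. unfold psi in Hle. lra.
    exfalso. apply Rnot_le_lt in Hgt.
    assert (E1 : 0 < exp (- a * 0) + exp (- a * (1 - 0))) by (pose proof (exp_pos (- a * 0)); pose proof (exp_pos (- a * (1 - 0))); lra).
    assert (Hx00 : x0 <> 0).
    { intros ->. unfold psi, B in Hgt. rewrite Hy0 in Hgt.
      assert (R0 * 1 <= R0 * (exp (- a * 0) + exp (- a * (1 - 0)))).
      { apply Rmult_le_compat_l; auto. replace (- a * 0) with 0 by ring. rewrite exp_0.
        pose proof (exp_pos (- a * (1 - 0))); lra. }
      unfold Rabs in Hr0; destruct Rcase_abs in Hr0; destruct Hs as [-> | ->]; lra. }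
    assert (Hx01 : x0 <> 1).
    { intros ->. unfold psi, B in Hgt. rewrite Hy1 in Hgt.
      assert (R0 * 1 <= R0 * (exp (- a * 1) + exp (- a * (1 - 1)))).
      { apply Rmult_le_compat_l; auto. replace (- a * (1 - 1)) with 0 by ring. rewrite exp_0.
        pose proof (exp_pos (- a * 1)); lra. }
      unfold Rabs in Hr1; destruct Rcase_abs in Hr1; destruct Hs as [-> | ->]; lra. }
    assert (Hin : 0 < x0 < 1) by lra.
    set (psi1 := fun x => s * (y' x - rp x) - B1 x).
    set (L := s * (y'' x0 - rpp x0) - B2 x0).
    apply (interior_max_contra psi psi1 x0 L Hin).
    - intros x Hx'. unfold psi, psi1.
      apply (derivable_pt_lim_minus (fun x => s * (y x - r x)) B).
      apply (derivable_pt_lim_scal (fun x => y x - r x)).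
      apply (derivable_pt_lim_minus y r). apply Hy; auto. apply Drp; auto.
      apply (exp_derivs K R0 a x).
    - unfold psi1, L.
      apply (derivable_pt_lim_minus (fun x => s * (y' x - rp x)) B1).
      apply (derivable_pt_lim_scal (fun x => y' x - rp x)).
      apply (derivable_pt_lim_minus y' rp). apply Hy; auto. apply Drpp; auto.
      apply (exp_derivs K R0 a x0).
    -
      destruct (Hy x0 Hin) as [_ [_ Heq]].
      assert (Hx0' : 0 <= x0 <= 1) by lra.
      set (E := exp (- a * x0) + exp (- a * (1 - x0))).
      assert (HE : 0 <= E) by (unfold E; pose proof (exp_pos (- a * x0)); pose proof (exp_pos (- a * (1 - x0))); lra).
      assert (Hpos : s * (y x0 - r x0) > K + R0 * E) by (unfold psi, B in Hgt; fold E in Hgt; lra).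
      assert (Hf : s * f x0 (y x0) >= m * (s * (y x0 - r x0))).
      { destruct Hs as [-> | ->].
        - pose proof (f_mono f fy m gamma x0 Hfy Hm Hg Hx0' (r x0) (y x0)) as [A _]. nra.
          rewrite (Hroot x0 Hx0') in A. lra.
        - pose proof (f_mono f fy m gamma x0 Hfy Hm Hg Hx0' (y x0) (r x0)) as [A _]. nra.
          rewrite (Hroot x0 Hx0') in A. lra. }
      assert (Hrpp : s * rpp x0 <= R2).
      { specialize (Brpp x0 Hin). destruct Hs as [-> | ->]; unfold Rabs in Brpp; destruct Rcase_abs in Brpp; lra. }
      assert (HB2 : B2 x0 * eps ^ 2 = m * R0 * E).
      { unfold B2. fold E. rewrite <- Ha2. ring. }
      assert (Heps2 : 0 < eps ^ 2) by (apply pow_lt; lra).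
      assert (Key : L * eps ^ 2 > 0).
      { unfold L.
        replace ((s * (y'' x0 - rpp x0) - B2 x0) * eps ^ 2)
          with (s * (eps ^ 2 * y'' x0) - s * rpp x0 * eps ^ 2 - B2 x0 * eps ^ 2) by ring.
        rewrite Heq, HB2.
        assert (s * rpp x0 * eps ^ 2 <= R2 * eps ^ 2) by (apply Rmult_le_compat_r; lra).
        assert (m * (s * (y x0 - r x0)) > m * (K + R0 * E)) by (apply Rmult_gt_compat_l; lra).
        assert (m * K = R2 * eps ^ 2) by (unfold K; field; lra).
        lra. }
      destruct (Rle_dec L 0) as [HL|HL]; [| lra].
      assert (L * eps ^ 2 <= 0) by (apply Rmult_le_0_r; lra). lra.
    - intros w Hw; apply Hmax; auto. }
  intros x Hx. pose proof (side 1 (or_introl eq_refl) x Hx). pose proof (side (-1) (or_intror eq_refl) x Hx).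
  unfold B in *. unfold Rabs; destruct Rcase_abs; unfold K, a in *; lra.
Qed.

Lemma second_diff (r rp rpp : R -> R) R2 x H :
  (forall x, 0 < x < 1 -> derivable_pt_lim r x (rp x)) ->
  (forall x, 0 < x < 1 -> derivable_pt_lim rp x (rpp x)) ->
  (forall x, 0 < x < 1 -> Rabs (rpp x) <= R2) ->
  0 < H -> 0 < x - H -> x + H < 1 ->
  Rabs (r (x - H) - 2 * r x + r (x + H)) <= 2 * R2 * H ^ 2.
Proof.
  intros Dr Drp B HH H1 H2.
  destruct (MVT_cor2 r rp x (x + H)) as [c1 [E1 C1]]. lra. intros; apply Dr; lra.
  destruct (MVT_cor2 r rp (x - H) x) as [c2 [E2 C2]]. lra. intros; apply Dr; lra.
  destruct (MVT_cor2 rp rpp c2 c1) as [c3 [E3 C3]]. lra. intros; apply Drp; lra.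
  replace (r (x - H) - 2 * r x + r (x + H)) with ((r (x + H) - r x) - (r x - r (x - H))) by ring.
  rewrite E1, E2. replace (x + H - x) with H by ring. replace (x - (x - H)) with H by ring.
  replace (rp c1 * H - rp c2 * H) with ((rp c1 - rp c2) * H) by ring. rewrite E3.
  rewrite !Rabs_mult. rewrite (Rabs_right H) by lra. rewrite (Rabs_right (c1 - c2)) by lra.
  specialize (B c3 ltac:(lra)).
  assert (Rabs (rpp c3) * (c1 - c2) <= R2 * (2 * H)).
  { apply Rmult_le_compat; try lra. apply Rabs_pos. }
  replace (2 * R2 * H ^ 2) with (R2 * (2 * H) * H) by ring.
  apply Rmult_le_compat_r; lra.
Qed.

Lemma cosh_bound t : 0 <= t -> t ^ 2 / 8 <= cosh t - 1.
Proof.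
  intros Ht. unfold cosh.
  set (p := exp (t / 2)). set (q := exp (- (t / 2))).
  assert (Hp : exp t = p * p) by (unfold p; rewrite <- exp_plus; f_equal; field).
  assert (Hq : exp (- t) = q * q) by (unfold q; rewrite <- exp_plus; f_equal; field).
  assert (Hpq : p * q = 1) by (unfold p, q; rewrite <- exp_plus; replace (t / 2 + - (t / 2)) with 0 by ring; apply exp_0).
  assert (Hp1 : 1 + t / 2 <= p).
  { destruct (Req_dec t 0) as [->|Hn]. unfold p. replace (0/2) with 0 by field. rewrite exp_0; lra.
    left. apply exp_ineq1. lra. }
  assert (Hq1 : q <= 1).
  { unfold q. rewrite <- exp_0. destruct (Req_dec t 0) as [->|Hn]. replace (- (0/2)) with 0 by field. lra.
    left. apply exp_increasing. lra. }
  assert (Hq0 : 0 < q) by apply exp_pos.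
  rewrite Hp, Hq.
  assert (E : (p * p + q * q) / 2 - 1 = (p - q) ^ 2 / 2) by (rewrite <- Hpq; field).
  rewrite E.
  assert (t / 2 <= p - q) by lra.
  assert ((t / 2) ^ 2 <= (p - q) ^ 2) by (apply pow_incr; lra).
  lra.
Qed.

Lemma gop_uniform gamma eps f N (x v : nat -> R) i H :
  (i <> 0)%nat -> (i <> N)%nat -> hstep x i = H -> hstep x (S i) = H -> 0 < H ->
  0 < gamma -> 0 < eps ->
  let t := sqrt gamma / eps * H in
  Gop gamma eps f N x v i =
    gamma * ((1 + cosh t) / (cosh t - 1)) * (v (i - 1)%nat - 2 * v i + v (S i))
    - (f (x (i - 1)%nat) (v (i - 1)%nat) + 2 * f (x i) (v i) + f (x (S i)) (v (S i))).
Proof.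
  intros Hi0 HiN H1 H2 HH Hg He t.
  assert (Hb : 0 < sqrt gamma / eps) by (apply Rdiv_lt_0_compat; [apply sqrt_lt_R0|]; lra).
  assert (Ht : 0 < t) by (unfold t; apply Rmult_lt_0_compat; lra).
  assert (Hc : 1 < cosh t) by (pose proof (cosh_bound t ltac:(lra)); assert (0 < t ^ 2 / 8) by (apply Rdiv_lt_0_compat; [apply pow_lt|]; lra); lra).
  assert (Hs : 0 < sinh t) by (unfold sinh; pose proof (exp_increasing (- t) t ltac:(lra)); lra).
  unfold Gop, ddcoef, dcoef, acoef. rewrite H1, H2. fold t.
  apply Nat.eqb_neq in Hi0. apply Nat.eqb_neq in HiN. rewrite Hi0, HiN.
  unfold tanh.
  set (b := sqrt gamma / eps) in *. set (c := cosh t) in *. set (s := sinh t) in *.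
  field. repeat split; try lra. nra.
Qed.

Lemma div4 q : ((4 * q) / 4 = q)%nat.
Proof. rewrite Nat.mul_comm. apply Nat.div_mul. lia. Qed.
Lemma div34 q : ((3 * (4 * q)) / 4 = 3 * q)%nat.
Proof. replace (3 * (4 * q))%nat with ((3 * q) * 4)%nat by lia. apply Nat.div_mul. lia. Qed.

Lemma mesh_mid eps m q j : (1 <= q)%nat -> (q <= j <= 3 * q)%nat ->
  shmesh eps m (4 * q) j = shlambda eps m (4 * q) +
     INR (j - q) * (2 * (1 - 2 * shlambda eps m (4 * q)) / INR (4 * q)).
Proof.
  intros Hq Hj. unfold shmesh. rewrite div4, div34.
  set (lam := shlambda eps m (4 * q)).
  assert (HqR : 0 < INR q) by (apply lt_0_INR; lia).
  destruct (Nat.leb_spec j q).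
  - assert (j = q) by lia. subst j. rewrite Nat.sub_diag. rewrite mult_INR. simpl INR.
    field. lra.
  - destruct (Nat.leb_spec j (3 * q)); [| lia]. reflexivity.
Qed.

Lemma mesh_low eps m q j : (1 <= q)%nat -> (j <= q)%nat ->
  shmesh eps m (4 * q) j = INR j * (4 * shlambda eps m (4 * q) / INR (4 * q)).
Proof.
  intros Hq Hj. unfold shmesh. rewrite div4.
  destruct (Nat.leb_spec j q); [reflexivity| lia].
Qed.

Theorem lemma3 (k : nat) (f fy : R -> R -> R) (m gamma C0 : R) :
  (2 <= k)%nat ->
  Ck k f ->
  is_pdy f fy ->
  0 < m ->
  (forall x t, 0 <= x <= 1 -> m <= fy x t) ->
  (forall x t, 0 <= x <= 1 -> fy x t <= gamma) ->
  0 < C0 ->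
  exists C : R, 0 < C /\
    forall (eps : R) (N : nat) (y : R -> R),
      0 < eps ->
      (0 < N)%nat -> (N mod 4 = 0)%nat ->
      shlambda eps m N = 2 * eps * ln (INR N) / sqrt m ->
      eps <= C0 / INR N ->
      is_solution eps f y ->
      forall i : nat,
        (N / 4 <= i <= N / 2 - 1)%nat ->
        (forall j : nat, (i - 1 <= j <= i + 1)%nat ->
           shmesh eps m N (N / 4) <= shmesh eps m N j <= 1 / 2) ->
        Rabs (Gop gamma eps f N (shmesh eps m N)
                (fun j => y (shmesh eps m N j)) i) <= C / INR N ^ 2.
Proof.
  intros Hk HCk Hfy Hm0 Hm Hg HC0.
  assert (Hgam : 0 < gamma) by (pose proof (Hm 0 0 ltac:(lra)); pose proof (Hg 0 0 ltac:(lra)); lra).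
  destruct (reduced_solution k f fy m gamma Hk HCk Hfy Hm0 Hm Hg)
    as [r [rp [rpp [R2 [Hr [Hroot [Drp [Drpp [HR2 BR2]]]]]]]]].
  set (R0 := Rabs (r 0) + Rabs (r 1)).
  assert (HR0 : 0 <= R0) by (unfold R0; pose proof (Rabs_pos (r 0)); pose proof (Rabs_pos (r 1)); lra).
  set (Phi := R2 / m * C0 ^ 2 + 2 * R0).
  assert (HPhi : 0 <= Phi).
  { unfold Phi. assert (0 <= R2 / m * C0 ^ 2) by (apply Rmult_le_pos; [apply Rmult_le_pos; [lra| left; apply Rinv_0_lt_compat; lra]| apply pow2_ge_0]). lra. }
  set (cb := 1 + 16 * C0 ^ 2 / gamma).
  assert (Hcb : 1 <= cb).
  { unfold cb. assert (0 <= 16 * C0 ^ 2 / gamma) by (apply Rmult_le_pos; [assert (0 <= C0 ^ 2) by apply pow2_ge_0; lra| left; apply Rinv_0_lt_compat; lra]). lra. }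
  exists (gamma * cb * (8 * R2 + 4 * Phi) + 4 * gamma * Phi + 1). split.
  { assert (0 <= gamma * cb * (8 * R2 + 4 * Phi)) by (apply Rmult_le_pos; [apply Rmult_le_pos|]; lra).
    assert (0 <= gamma * Phi) by (apply Rmult_le_pos; lra). lra. }
  intros eps N y Heps HN0 HN4 Hlam HepsN Hsol i Hi Hj.
  assert (HN : N = (4 * (N / 4))%nat) by (pose proof (Nat.div_mod N 4 ltac:(lia)); lia).
  remember (N / 4)%nat as q eqn:Hq.
  assert (Hq1 : (1 <= q)%nat) by lia.
  assert (HN2 : (N / 2 = 2 * q)%nat) by (rewrite HN; replace (4 * q)%nat with ((2 * q) * 2)%nat by lia; apply Nat.div_mul; lia).
  rewrite HN2 in Hi.
  clear Hq. subst N.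
  set (N := (4 * q)%nat) in *.
  set (lam := shlambda eps m N) in *.
  assert (HqR : 1 <= INR q) by (apply (le_INR 1); auto).
  assert (HNR : INR N = 4 * INR q) by (unfold N; rewrite mult_INR; simpl INR; ring).
  assert (HlnN : 0 < ln (INR N)) by (rewrite <- ln_1; apply ln_increasing; lra).
  assert (Hlam0 : 0 < lam).
  { rewrite Hlam. apply Rdiv_lt_0_compat; [| apply sqrt_lt_R0; lra].
    apply Rmult_lt_0_compat; lra. }
  assert (Hlam14 : lam <= 1 / 4) by (unfold lam, shlambda; apply Rmin_l).
  assert (Hxq : shmesh eps m N q = lam).
  { unfold N. rewrite (mesh_mid eps m q q Hq1 ltac:(lia)). fold N lam. rewrite Nat.sub_diag. simpl. ring. }
  rewrite Hxq in Hj.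
  assert (Hiq : (q < i)%nat).
  { destruct (Nat.eq_dec i q) as [->|Hne]; [| lia].
    exfalso. destruct (Hj (q - 1)%nat ltac:(lia)) as [A _].
    unfold N in A. rewrite (mesh_low eps m q (q - 1) Hq1 ltac:(lia)) in A. fold N lam in A.
    rewrite minus_INR in A by lia. rewrite HNR in A. simpl INR in A.
    assert (A2 : (INR q - 1) * (4 * lam / (4 * INR q)) = lam - lam / INR q) by (field; lra).
    rewrite A2 in A. assert (0 < lam / INR q) by (apply Rdiv_lt_0_compat; lra). lra. }
  set (H := 2 * (1 - 2 * lam) / INR N).
  assert (HX : forall j, (q <= j <= 3 * q)%nat -> shmesh eps m N j = lam + (INR j - INR q) * H).
  { intros j Hjq. unfold N. rewrite (mesh_mid eps m q j Hq1 Hjq). fold N lam. rewrite minus_INR by lia. reflexivity. }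
  set (X := shmesh eps m N) in *.
  set (xi := X i).
  assert (EX1 : X (i - 1)%nat = xi - H).
  { unfold xi. rewrite !HX by lia. rewrite minus_INR by lia. simpl INR. ring. }
  assert (EX3 : X (S i) = xi + H).
  { unfold xi. rewrite !HX by lia. rewrite S_INR. ring. }
  assert (Hst1 : hstep X i = H) by (unfold hstep; rewrite EX1; unfold xi; ring).
  assert (Hst2 : hstep X (S i) = H) by (unfold hstep; replace (S i - 1)%nat with i by lia; rewrite EX3; unfold xi; ring).
  assert (HH1 : 1 / INR N <= H) by (unfold H; apply Rmult_le_compat_r; [left; apply Rinv_0_lt_compat; lra| lra]).
  assert (HH2 : H <= 2 / INR N) by (unfold H; apply Rmult_le_compat_r; [left; apply Rinv_0_lt_compat; lra| lra]).
  assert (HH0 : 0 < H) by (assert (0 < 1 / INR N) by (apply Rdiv_lt_0_compat; lra); lra).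
  rewrite (gop_uniform gamma eps f N X (fun j => y (X j)) i H ltac:(lia) ltac:(unfold N; lia) Hst1 Hst2 HH0 Hgam Heps).
  cbv zeta.
  rewrite EX1, EX3. fold xi.
  assert (Hr1 : lam <= xi - H) by (rewrite <- EX1; apply (Hj (i - 1)%nat); lia).
  assert (Hr2 : xi + H <= 1 / 2) by (rewrite <- EX3; apply (Hj (S i)); lia).
  assert (HN2p : 0 < INR N ^ 2) by (apply pow_lt; lra).
  assert (Hexp : forall x, lam <= x -> exp (- (sqrt m / eps) * x) <= / INR N ^ 2).
  { intros x Hx.
    assert (E : exp (- (sqrt m / eps) * lam) = / INR N ^ 2).
    { replace (- (sqrt m / eps) * lam) with (- (ln (INR N) + ln (INR N))).
      rewrite exp_Ropp, exp_plus, exp_ln by lra. simpl. f_equal. ring.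
      rewrite Hlam. assert (0 < sqrt m) by (apply sqrt_lt_R0; lra). field. split; lra. }
    rewrite <- E. assert (Ha : 0 < sqrt m / eps) by (apply Rdiv_lt_0_compat; [apply sqrt_lt_R0|]; lra).
    destruct (Req_dec x lam) as [->|Hne]. lra.
    left. apply exp_increasing. nra. }
  assert (Heps2 : eps ^ 2 <= C0 ^ 2 / INR N ^ 2).
  { replace (C0 ^ 2 / INR N ^ 2) with ((C0 / INR N) ^ 2) by (field; lra).
    apply pow_incr. lra. }
  assert (Bphi : forall x, lam <= x <= 1 / 2 -> Rabs (y x - r x) <= Phi / INR N ^ 2).
  { intros x Hx.
    pose proof (comparison f fy m gamma eps y r rp rpp R2 R0 Hfy Hm Hg Hm0 Heps Hsol Hr Hroot Drp Drpp HR2 BR2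
                 ltac:(unfold R0; pose proof (Rabs_pos (r 1)); lra) ltac:(unfold R0; pose proof (Rabs_pos (r 0)); lra)
                 x ltac:(lra)) as Cmp.
    eapply Rle_trans. exact Cmp.
    pose proof (Hexp x ltac:(lra)). pose proof (Hexp (1 - x) ltac:(lra)).
    assert (R2 / m * eps ^ 2 <= R2 / m * (C0 ^ 2 / INR N ^ 2)).
    { apply Rmult_le_compat_l; auto. apply Rmult_le_pos; [lra| left; apply Rinv_0_lt_compat; lra]. }
    assert (R0 * (exp (- (sqrt m / eps) * x) + exp (- (sqrt m / eps) * (1 - x))) <= R0 * (2 / INR N ^ 2)).
    { apply Rmult_le_compat_l; auto. unfold Rdiv. lra. }
    replace (Phi / INR N ^ 2) with (R2 / m * (C0 ^ 2 / INR N ^ 2) + R0 * (2 / INR N ^ 2)) by (unfold Phi; field; lra).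
    lra. }
  assert (Bf : forall x, lam <= x <= 1 / 2 -> Rabs (f x (y x)) <= gamma * (Phi / INR N ^ 2)).
  { intros x Hx. assert (Hx01 : 0 <= x <= 1) by lra.
    eapply Rle_trans; [| apply Rmult_le_compat_l; [lra| apply (Bphi x Hx)]].
    rewrite <- (Rminus_0_r (f x (y x))). rewrite <- (Hroot x Hx01).
    destruct (Rle_dec (r x) (y x)) as [Hle|Hlt].
    - pose proof (f_mono f fy m gamma x Hfy Hm Hg Hx01 (r x) (y x) Hle) as [A B].
      rewrite !Rabs_right; nra.
    - pose proof (f_mono f fy m gamma x Hfy Hm Hg Hx01 (y x) (r x) ltac:(lra)) as [A B].
      rewrite !Rabs_left1; nra. }
  set (t := sqrt gamma / eps * H).
  assert (Hsg : 0 < sqrt gamma) by (apply sqrt_lt_R0; lra).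
  assert (Ht0 : sqrt gamma / C0 <= t).
  { unfold t. assert (HeN : eps * INR N <= C0).
    { apply (Rmult_le_compat_r (INR N)) in HepsN; [| lra].
      replace (C0 / INR N * INR N) with C0 in HepsN by (field; lra). lra. }
    apply Rle_trans with (sqrt gamma / eps * (1 / INR N)).
    - replace (sqrt gamma / eps * (1 / INR N)) with (sqrt gamma / (eps * INR N)) by (field; lra).
      unfold Rdiv. apply Rmult_le_compat_l; [lra|]. apply Rinv_le_contravar; [nra| lra].
    - apply Rmult_le_compat_l; [| lra]. left; apply Rdiv_lt_0_compat; lra. }
  assert (Ht2 : gamma / C0 ^ 2 <= t ^ 2).
  { replace (gamma / C0 ^ 2) with ((sqrt gamma / C0) ^ 2).
    apply pow_incr. split; [left; apply Rdiv_lt_0_compat; lra| auto].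
    replace ((sqrt gamma / C0) ^ 2) with ((sqrt gamma * sqrt gamma) / C0 ^ 2) by (field; lra).
    rewrite sqrt_sqrt; lra. }
  assert (Hct : gamma / (8 * C0 ^ 2) <= cosh t - 1).
  { pose proof (cosh_bound t ltac:(assert (0 < sqrt gamma / C0) by (apply Rdiv_lt_0_compat; lra); lra)).
    replace (gamma / (8 * C0 ^ 2)) with (gamma / C0 ^ 2 / 8) by (field; lra). lra. }
  assert (Hg8 : 0 < gamma / (8 * C0 ^ 2)) by (apply Rdiv_lt_0_compat; [| assert (0 < C0 ^ 2) by (apply pow_lt; lra)]; lra).
  set (c := (1 + cosh t) / (cosh t - 1)).
  assert (Hc0 : 0 <= c) by (unfold c; apply Rmult_le_pos; [lra| left; apply Rinv_0_lt_compat; lra]).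
  assert (Hccb : c <= cb).
  { unfold c, cb. replace ((1 + cosh t) / (cosh t - 1)) with (1 + 2 / (cosh t - 1)) by (field; lra).
    apply Rplus_le_compat_l.
    replace (16 * C0 ^ 2 / gamma) with (2 / (gamma / (8 * C0 ^ 2))) by (field; repeat split; lra).
    unfold Rdiv. apply Rmult_le_compat_l; [lra|]. apply Rinv_le_contravar; lra. }
  assert (Hsd : Rabs (r (xi - H) - 2 * r xi + r (xi + H)) <= 8 * R2 / INR N ^ 2).
  { eapply Rle_trans. apply (second_diff r rp rpp R2 xi H Drp Drpp BR2 HH0); lra.
    assert (H ^ 2 <= 4 / INR N ^ 2).
    { replace (4 / INR N ^ 2) with ((2 / INR N) ^ 2) by (field; lra). apply pow_incr; lra. }
    replace (8 * R2 / INR N ^ 2) with (2 * R2 * (4 / INR N ^ 2)) by (field; lra).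
    apply Rmult_le_compat_l; lra. }
  assert (HD2 : Rabs (y (xi - H) - 2 * y xi + y (xi + H)) <= (8 * R2 + 4 * Phi) / INR N ^ 2).
  { replace (y (xi - H) - 2 * y xi + y (xi + H)) with
      ((y (xi - H) - r (xi - H)) - 2 * (y xi - r xi) + (y (xi + H) - r (xi + H)) + (r (xi - H) - 2 * r xi + r (xi + H))) by ring.
    pose proof (Bphi (xi - H) ltac:(lra)). pose proof (Bphi xi ltac:(lra)). pose proof (Bphi (xi + H) ltac:(lra)).
    set (a1 := y (xi - H) - r (xi - H)) in *. set (a2 := y xi - r xi) in *. set (a3 := y (xi + H) - r (xi + H)) in *.
    set (s2 := r (xi - H) - 2 * r xi + r (xi + H)) in *.
    replace ((8 * R2 + 4 * Phi) / INR N ^ 2) with (Phi / INR N ^ 2 + 2 * (Phi / INR N ^ 2) + Phi / INR N ^ 2 + 8 * R2 / INR N ^ 2) by (field; lra).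
    unfold Rabs in *. repeat destruct Rcase_abs; lra. }
  assert (HS : Rabs (f (xi - H) (y (xi - H)) + 2 * f xi (y xi) + f (xi + H) (y (xi + H))) <= 4 * gamma * Phi / INR N ^ 2).
  { pose proof (Bf (xi - H) ltac:(lra)). pose proof (Bf xi ltac:(lra)). pose proof (Bf (xi + H) ltac:(lra)).
    set (a1 := f (xi - H) (y (xi - H))) in *. set (a2 := f xi (y xi)) in *. set (a3 := f (xi + H) (y (xi + H))) in *.
    replace (4 * gamma * Phi / INR N ^ 2) with (gamma * (Phi / INR N ^ 2) + 2 * (gamma * (Phi / INR N ^ 2)) + gamma * (Phi / INR N ^ 2)) by (field; lra).
    unfold Rabs in *. repeat destruct Rcase_abs; lra. }
  set (D := y (xi - H) - 2 * y xi + y (xi + H)) in *.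
  set (S := f (xi - H) (y (xi - H)) + 2 * f xi (y xi) + f (xi + H) (y (xi + H))) in *.
  assert (T1 : Rabs (gamma * c * D) <= gamma * cb * ((8 * R2 + 4 * Phi) / INR N ^ 2)).
  { rewrite Rabs_mult, Rabs_mult, (Rabs_right gamma), (Rabs_right c) by lra.
    apply Rmult_le_compat; try lra. apply Rmult_le_pos; lra. apply Rabs_pos.
    apply Rmult_le_compat_l; lra. }
  replace ((gamma * cb * (8 * R2 + 4 * Phi) + 4 * gamma * Phi + 1) / INR N ^ 2)
    with (gamma * cb * ((8 * R2 + 4 * Phi) / INR N ^ 2) + 4 * gamma * Phi / INR N ^ 2 + 1 / INR N ^ 2) by (field; lra).
  assert (0 < 1 / INR N ^ 2) by (apply Rdiv_lt_0_compat; lra).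
  pose proof (Rabs_triang (gamma * c * D) (- S)). rewrite Rabs_Ropp in H1.
  unfold Rminus. lra.
Qed.
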